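(* Let $n\ge2$, $A=\{a_1,\dots,a_k\}$ finite, and $u_1,\dots,u_n:A\to\mathbb{R}$. In the Bid, Price \& Choose game defined in the context: (i) in every subgame-perfect Nash equilibrium the realized option is efficient (whatever the realization of the random draws), and every efficient option is the realized option of some subgame-perfect Nash equilibrium; (ii) in every subgame-perfect Nash equilibrium, the expected equilibrium payoffs $U^1,\dots,U^n$ satisfy $U^i-U^j=\mathrm{Avg}_i-\mathrm{Avg}_j$ for all $i,j$.
   Context: Players have quasi-linear utilities $u_i(a)+t_i$ and are expected-payoff maximizers. $\mathrm{Avg}_i=\frac1k\sum_l u_i(a_l)$; an option $a$ is efficient if it maximizes $\sum_{i=1}^n u_i(a)$ over $A$. Let $P=\{p\in\mathbb{R}^k:\sum_j p_j=0\}$. The $P^{n-1}\&C$ game with order of players $(\pi_1,\dots,\pi_n)$: $\pi_1$ chooses $p^2\in P$; for $m=2,\dots,n-1$, $\pi_m$, having observed $p^2,\dots,p^m$, chooses $p^{m+1}\in P$; $\pi_n$, having observed all prices, chooses $a\in A$; then $\pi_n$ pays $p^n(a)$ to $\pi_{n-1}$ and each $\pi_m$, $2\le m\le n-1$, pays $p^m(a)$ to $\pi_{m-1}$ and receives $p^{m+1}(a)$ from $\pi_{m+1}$. The Bid, Price \& Choose game: each player simultaneously submits a bid $b_i\ge0$; let $W=\{i:b_i=\max_j b_j\}$; one $i\in W$ is drawn uniformly at random, pays $b_i$ and becomes the first mover $\pi_1$, and every other player receives $b_i/(n-1)$; the order of the remaining players is drawn uniformly at random and made known; then the $P^{n-1}\&C$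 game is played in that order. A subgame-perfect Nash equilibrium is a profile of pure strategies (bids, and history-dependent price/option choices) inducing a Nash equilibrium (in expected payoffs) in every subgame. *)

(* Defs.v *)
From HB Require Import structures.
From mathcomp Require Import all_boot all_order all_algebra.
From mathcomp Require Import fingroup perm.
From mathcomp Require Import reals.
Set Implicit Arguments. Unset Strict Implicit. Unset Printing Implicit Defensive.
Import Order.TTheory GRing.Theory Num.Theory.
Local Open Scope ring_scope.

(* An order of players is a permutation sg : {perm 'I_n}, where
   val (sg i) is the (0-based) position of player i; position 0 is the
   first mover pi_1 (the auction winner).
   A price vector is a function 'I_k -> R; it lies in P iff it sums to 0.
   The price list ps = [:: p^2; ...; p^n] has index m <-> p^(m+2),
   chosen by the player at position m. *)

Section BPC.
Variables (R : realType) (n k : nat).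

Definition price_vec := 'I_k -> R.

Definition inP (p : price_vec) : bool := \sum_(j < k) p j == 0.

Definition argmax (b : 'I_n -> R) : {set 'I_n} :=
  [set i | [forall j, b j <= b i]].

(* a draw (winner + order of the others) is valid for bids b iff the first
   mover is a highest bidder; the draw is uniform over all valid orders *)
Definition valid_draw (b : 'I_n -> R) (sg : {perm 'I_n}) : bool :=
  [forall i, (val (sg i) == 0%N) ==> (i \in argmax b)].

Definition draws (b : 'I_n -> R) : {set {perm 'I_n}} :=
  [set sg | valid_draw b sg].

(* A history after the bids is (b, sg, ps): the bid vector, the
   realized order, and the prices announced so far.  The mover at a price
   node with size ps = j is the player at position j; at the choice node
   (size ps = n-1) the mover is the player at position n-1. *)
Record profile := Profile {
  bid : 'I_n -> R;
  price : ('I_n -> R) -> {perm 'I_n} -> seq price_vec -> price_vec;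
  choice : ('I_n -> R) -> {perm 'I_n} -> seq price_vec -> 'I_k }.

Definition valid_profile (s : profile) : Prop :=
  (forall i, 0 <= bid s i) /\ (forall b sg ps, inP (price s b sg ps)).

Definition deviation (i : 'I_n) (s s' : profile) : Prop :=
  [/\ valid_profile s',
      (forall j, j != i -> bid s' j = bid s j),
      (forall b (sg : {perm 'I_n}) ps, val (sg i) != size ps -> price s' b sg ps = price s b sg ps)
    & (forall b (sg : {perm 'I_n}) ps, val (sg i) != n.-1 -> choice s' b sg ps = choice s b sg ps)].

Fixpoint extend (pr : seq price_vec -> price_vec) (m : nat) (ps : seq price_vec)
  : seq price_vec :=
  match m with
  | 0 => ps
  | m'.+1 => extend pr m' (rcons ps (pr ps))
  end.

Definition final_prices (s : profile) b sg ps : seq price_vec :=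
  extend (price s b sg) (n.-1 - size ps) ps.

Definition outcome_option (s : profile) b sg ps : 'I_k :=
  choice s b sg (final_prices s b sg ps).

Variable u : 'I_n -> 'I_k -> R.

Definition payoff (i : 'I_n) (b : 'I_n -> R) (sg : {perm 'I_n})
    (ps : seq price_vec) (a : 'I_k) : R :=
  let m := val (sg i) in
  let winner_bid := \sum_(j | val (sg j) == 0%N) b j in
  let bid_tr := if m == 0%N then - b i else winner_bid / (n.-1)%:R in
  let recv := if (m < n.-1)%N then nth (fun _ => 0) ps m a else 0 in
  let paid := if (0 < m)%N then nth (fun _ => 0) ps m.-1 a else 0 in
  u i a + bid_tr + (recv - paid).

Definition pay_node (s : profile) i b sg ps : R :=
  let fps := final_prices s b sg ps in
  payoff i b sg fps (choice s b sg fps).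

Definition pay_chance (s : profile) i b : R :=
  (#|draws b|%:R)^-1 * \sum_(sg in draws b) pay_node s i b sg [::].

Definition pay_root (s : profile) i : R := pay_chance s i (bid s).

Definition valid_node (b : 'I_n -> R) sg (ps : seq price_vec) : Prop :=
  [/\ (forall j, 0 <= b j), valid_draw b sg, all inP ps & (size ps <= n.-1)%N].

Definition SPNE (s : profile) : Prop :=
  valid_profile s /\
  forall i s', deviation i s s' ->
    [/\ pay_root s' i <= pay_root s i,
        (forall b, (forall j, 0 <= b j) -> pay_chance s' i b <= pay_chance s i b)
      & (forall b sg ps, valid_node b sg ps -> pay_node s' i b sg ps <= pay_node s i b sg ps)].

Definition realized (s : profile) (sg : {perm 'I_n}) : 'I_k :=
  outcome_option s (bid s) sg [::].

Definition efficient (a : 'I_k) : Prop :=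
  forall a', \sum_(i < n) u i a' <= \sum_(i < n) u i a.

Definition Avg (i : 'I_n) : R := (k%:R)^-1 * \sum_(l < k) u i l.

End BPC.

(* Main.v *)
Require Import Defs.
From HB Require Import structures.
From mathcomp Require Import all_boot all_order all_algebra.
From mathcomp Require Import fingroup perm.
From mathcomp Require Import reals.
From mathcomp Require Import zify ring lra.
Import Order.TTheory GRing.Theory Num.Theory.
Local Open Scope ring_scope.
Set Implicit Arguments. Unset Strict Implicit. Unset Printing Implicit Defensive.

Section Ext.
Variables (R : realType) (k : nat) (x0 : price_vec R k).
Local Notation T := (price_vec R k).

Lemma size_extend (pr : seq T -> T) d ps : size (extend pr d ps) = (size ps + d)%N.
Proof. elim: d ps => [|d IH] ps /=; first by rewrite addn0. by rewrite IH size_rcons addSnnS. Qed.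

Lemma extend_prefix (pr : seq T -> T) d ps : exists t, extend pr d ps = ps ++ t.
Proof.
elim: d ps => [|d IH] ps /=; first by exists [::]; rewrite cats0.
have [t ->] := IH (rcons ps (pr ps)). by exists (pr ps :: t); rewrite -cats1 -catA.
Qed.

Lemma nth_extend_lt (pr : seq T -> T) d ps j : (j < size ps)%N ->
  nth x0 (extend pr d ps) j = nth x0 ps j.
Proof. move=> hj; have [t ->] := extend_prefix pr d ps; by rewrite nth_cat hj. Qed.

Lemma nth_extend_size (pr : seq T -> T) d ps : (0 < d)%N ->
  nth x0 (extend pr d ps) (size ps) = pr ps.
Proof.
case: d => [//|d] _ /=. rewrite nth_extend_lt; last by rewrite size_rcons.
by rewrite nth_rcons ltnn eqxx.
Qed.

Lemma extend_agree (pr1 pr2 : seq T -> T) d ps :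
  (forall ps', (size ps <= size ps')%N -> pr1 ps' = pr2 ps') ->
  extend pr1 d ps = extend pr2 d ps.
Proof.
elim: d ps => [|d IH] ps H //=. rewrite H // IH // => ps' h. apply: H.
by apply: leq_trans h; rewrite size_rcons.
Qed.
End Ext.

Section Main.
Variables (R : realType) (n k : nat) (u : 'I_n -> 'I_k -> R).
Hypotheses (n2 : (2 <= n)%N) (k0 : (0 < k)%N).

Local Notation pv := (price_vec R k).
Local Notation prof := (profile R n k).

Definition S (sg : {perm 'I_n}) m a : R := \sum_(j | (m <= val (sg j))%N) u j a.
Definition q (ps : seq pv) m a : R :=
  if (0 < m)%N then nth (fun _ => 0) ps m.-1 a else 0.
Definition avg (f : 'I_k -> R) : R := (k%:R)^-1 * \sum_(l < k) f l.
Definition bt (b : 'I_n -> R) (sg : {perm 'I_n}) i : R :=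
  if val (sg i) == 0%N then - b i
  else (\sum_(j | val (sg j) == 0%N) b j) / (n.-1)%:R.
Definition net (s : prof) i b sg ps := pay_node u s i b sg ps - bt b sg i.

Lemma kR0 : (k%:R : R) != 0. Proof. by rewrite pnatr_eq0 -lt0n. Qed.

Lemma sum_const_k (c : R) : \sum_(l < k) c = k%:R * c.
Proof. by rewrite sumr_const card_ord mulr_natl. Qed.

Lemma avg_const (c : R) : avg (fun _ => c) = c.
Proof. by rewrite /avg sum_const_k mulrA mulVf ?mul1r // kR0. Qed.

Lemma avgD (f g : 'I_k -> R) : avg (fun a => f a + g a) = avg f + avg g.
Proof. by rewrite /avg big_split mulrDr. Qed.

Lemma avgB (f g : 'I_k -> R) : avg (fun a => f a - g a) = avg f - avg g.
Proof. by rewrite /avg sumrB mulrBr. Qed.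

Lemma avgP0 (f : 'I_k -> R) (p : pv) : inP p -> avg (fun a => f a - p a) = avg f.
Proof. move=> /eqP hp; by rewrite avgB /avg hp mulr0 subr0. Qed.

Lemma avg_le (f : 'I_k -> R) a0 : (forall a, f a <= f a0) -> avg f <= f a0.
Proof.
move=> h; rewrite /avg -[leRHS](avg_const (f a0)) /avg.
rewrite ler_wpM2l // ?invr_ge0 ?ler0n //; exact: ler_sum.
Qed.

Lemma k_avg (f : 'I_k -> R) : k%:R * avg f = \sum_(l < k) f l.
Proof. by rewrite /avg mulrA divff ?mul1r // kR0. Qed.

Lemma S_split (sg : {perm 'I_n}) (i : 'I_n) m (a : 'I_k) : val (sg i) = m -> S sg m a = u i a + S sg m.+1 a.
Proof.
move=> hi; rewrite /S (bigD1 i) /=; last by rewrite hi.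
congr (_ + _); apply: eq_bigl => j.
case: (eqVneq j i) => [->|hji]; first by rewrite hi ltnn andbF.
rewrite andbT; have : val (sg j) != m.
  by rewrite -hi; apply/eqP => /val_inj /perm_inj /eqP; rewrite (negbTE hji).
move=> h; rewrite ltn_neqAle eq_sym h //.
Qed.

Lemma S_n (sg : {perm 'I_n}) (a : 'I_k) : S sg n a = 0.
Proof. rewrite /S big_pred0 // => j; by rewrite leqNgt ltn_ord. Qed.

Lemma payoffE (i : 'I_n) b (sg : {perm 'I_n}) (ps : seq pv) (a : 'I_k) : payoff u i b sg ps a =
  u i a + bt b sg i + ((if (val (sg i) < n.-1)%N then nth (fun _ => 0) ps (val (sg i)) a else 0)
  - (if (0 < val (sg i))%N then nth (fun _ => 0) ps (val (sg i)).-1 a else 0)).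
Proof. by []. Qed.

Lemma qE (ps ps' : seq pv) m (a : 'I_k) : (m <= size ps)%N ->
  (forall j, (j < size ps)%N -> nth (fun _ => 0) ps' j = nth (fun _ => 0) ps j) ->
  (if (0 < m)%N then nth (fun _ => 0) ps' m.-1 a else 0) = q ps m a.
Proof.
move=> hm h; rewrite /q; case: m hm => [//|m] hm /=; by rewrite h.
Qed.

Lemma fp_prefix (s : prof) b (sg : {perm 'I_n}) (ps : seq pv) j : (j < size ps)%N ->
  nth (fun _ => 0) (final_prices s b sg ps) j = nth (fun _ => 0) ps j.
Proof. exact: nth_extend_lt. Qed.

Lemma fp_last (s : prof) b (sg : {perm 'I_n}) (ps : seq pv) : size ps = n.-1 -> final_prices s b sg ps = ps.
Proof. by move=> h; rewrite /final_prices h subnn. Qed.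

Lemma fp_step (s : prof) b (sg : {perm 'I_n}) (ps : seq pv) : (size ps < n.-1)%N ->
  final_prices s b sg ps = final_prices s b sg (rcons ps (price s b sg ps)).
Proof.
move=> h; by rewrite /final_prices size_rcons -(subnSK h).
Qed.

Lemma fp_size (s : prof) b (sg : {perm 'I_n}) (ps : seq pv) : (size ps < n.-1)%N ->
  nth (fun _ => 0) (final_prices s b sg ps) (size ps) = price s b sg ps.
Proof. move=> h; rewrite /final_prices nth_extend_size // subn_gt0 //. Qed.

Lemma fp_sz (s : prof) b (sg : {perm 'I_n}) (ps : seq pv) : (size ps <= n.-1)%N -> size (final_prices s b sg ps) = n.-1.
Proof. move=> h; rewrite /final_prices size_extend subnKC //. Qed.

Lemma pay_step (s : prof) j b (sg : {perm 'I_n}) (ps : seq pv) : (size ps < n.-1)%N ->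
  pay_node u s j b sg ps = pay_node u s j b sg (rcons ps (price s b sg ps)).
Proof. by move=> h; rewrite /pay_node -fp_step. Qed.

Lemma out_step (s : prof) b (sg : {perm 'I_n}) (ps : seq pv) : (size ps < n.-1)%N ->
  outcome_option s b sg ps = outcome_option s b sg (rcons ps (price s b sg ps)).
Proof. by move=> h; rewrite /outcome_option -fp_step. Qed.

Lemma net_mover (s : prof) (i : 'I_n) b (sg : {perm 'I_n}) (ps : seq pv) : val (sg i) = size ps -> (size ps < n.-1)%N ->
  net s i b sg ps = u i (outcome_option s b sg ps)
     + price s b sg ps (outcome_option s b sg ps) - q ps (size ps) (outcome_option s b sg ps).
Proof.
move=> hi hs; rewrite /net /pay_node payoffE hi hs fp_size //.
rewrite (qE (ps := ps)) //; last by move=> j hj; rewrite fp_prefix.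
rewrite /outcome_option; lra.
Qed.

Lemma net_last (s : prof) (i : 'I_n) b (sg : {perm 'I_n}) (ps : seq pv) : val (sg i) = n.-1 -> size ps = n.-1 ->
  net s i b sg ps = u i (outcome_option s b sg ps) - q ps n.-1 (outcome_option s b sg ps).
Proof.
move=> hi hs; rewrite /net /pay_node payoffE hi ltnn fp_last //.
have h0 : (0 < n.-1)%N by lia.
rewrite /q h0 /outcome_option fp_last //; lra.
Qed.

Lemma net_prev (s : prof) (i : 'I_n) b (sg : {perm 'I_n}) (ps : seq pv) : (val (sg i) < size ps)%N -> (size ps <= n.-1)%N ->
  net s i b sg ps = u i (outcome_option s b sg ps)
     + nth (fun _ => 0) ps (val (sg i)) (outcome_option s b sg ps)
     - q ps (val (sg i)) (outcome_option s b sg ps).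
Proof.
move=> hi hs; rewrite /net /pay_node payoffE.
have -> : (val (sg i) < n.-1)%N by lia.
rewrite fp_prefix //.
rewrite (qE (ps := ps)) ?(ltnW hi) //; last by move=> j hj; rewrite fp_prefix.
rewrite /outcome_option; lra.
Qed.


Lemma avg_ext (f g : 'I_k -> R) : (forall x, f x = g x) -> avg f = avg g.
Proof. by move=> h; rewrite /avg; congr (_ * _); apply: eq_bigr. Qed.

Lemma avg_S_n (sg : {perm 'I_n}) : avg (S sg n) = 0.
Proof. by rewrite /avg big1 ?mulr0 // => x _; exact: S_n. Qed.

Lemma q_rcons (ps : seq pv) x m (a : 'I_k) : (m <= size ps)%N -> q (rcons ps x) m a = q ps m a.
Proof.
rewrite /q; case: m => [//|m] h /=; by rewrite nth_rcons h.
Qed.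

Lemma q_rcons_last (ps : seq pv) x (a : 'I_k) : q (rcons ps x) (size ps).+1 a = x a.
Proof. by rewrite /q /= nth_rcons ltnn eqxx. Qed.

Lemma net_step (s : prof) j b (sg : {perm 'I_n}) (ps : seq pv) : (size ps < n.-1)%N ->
  net s j b sg ps = net s j b sg (rcons ps (price s b sg ps)).
Proof. by move=> h; rewrite /net -pay_step. Qed.

Lemma dev_fp i (s s' : prof) : deviation i s s' -> forall b (sg : {perm 'I_n}) (ps : seq pv),
  (val (sg i) < size ps)%N -> final_prices s' b sg ps = final_prices s b sg ps.
Proof.
case=> _ _ hp _ b sg ps h; rewrite /final_prices; apply: extend_agree => ps' h'.
apply: hp; rewrite neq_ltn; apply/orP; left; exact: leq_trans h h'.
Qed.

Lemma dev_after i (s s' : prof) : deviation i s s' -> forall j b (sg : {perm 'I_n}) (ps : seq pv),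
  (val (sg i) < size ps)%N -> (size ps <= n.-1)%N ->
  pay_node u s' j b sg ps = pay_node u s j b sg ps.
Proof.
move=> hd j b sg ps h1 h2; rewrite /pay_node (dev_fp hd) //.
case: hd => _ _ _ hc; rewrite hc //; apply/eqP; lia.
Qed.

Lemma dev_out i (s s' : prof) : deviation i s s' -> forall b (sg : {perm 'I_n}) (ps : seq pv),
  (val (sg i) < size ps)%N -> (size ps <= n.-1)%N ->
  outcome_option s' b sg ps = outcome_option s b sg ps.
Proof.
move=> hd b sg ps h1 h2; rewrite /outcome_option (dev_fp hd) //.
case: hd => _ _ _ hc; rewrite hc //; apply/eqP; lia.
Qed.

Lemma dev_mover i (s s' : prof) : deviation i s s' -> forall j b (sg : {perm 'I_n}) (ps : seq pv),
  val (sg i) = size ps -> (size ps < n.-1)%N ->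
  pay_node u s' j b sg ps = pay_node u s j b sg (rcons ps (price s' b sg ps)).
Proof.
move=> hd j b sg ps h1 h2; rewrite pay_step // (dev_after hd) // size_rcons; lia.
Qed.

Lemma dev_other i (s s' : prof) : deviation i s s' -> forall j b (sg : {perm 'I_n}) (ps : seq pv),
  val (sg i) != size ps -> (size ps < n.-1)%N ->
  pay_node u s' j b sg ps = pay_node u s' j b sg (rcons ps (price s b sg ps)).
Proof.
move=> hd j b sg ps h1 h2; rewrite pay_step //; case: hd => _ _ hp _; by rewrite hp.
Qed.

Definition NodeEq (s : prof) : Prop := valid_profile s /\
  forall i s', deviation i s s' -> forall b sg ps, valid_node b sg ps ->
    pay_node u s' i b sg ps <= pay_node u s i b sg ps.

Lemma valid_rcons b (sg : {perm 'I_n}) (ps : seq pv) x : valid_node b sg ps -> inP x ->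
  (size ps < n.-1)%N -> valid_node b sg (rcons ps x).
Proof.
case=> h1 h2 h3 h4 hx hs; split => //; first by rewrite all_rcons hx.
by rewrite size_rcons.
Qed.

Lemma lemA (s : prof) : NodeEq s -> forall d b (sg : {perm 'I_n}) (ps : seq pv),
  valid_node b sg ps -> (size ps + d)%N = n.-1 ->
  [/\ forall a', S sg (size ps) a' - q ps (size ps) a' <=
          S sg (size ps) (outcome_option s b sg ps) - q ps (size ps) (outcome_option s b sg ps),
      forall i, val (sg i) = size ps -> net s i b sg ps =
          S sg (size ps) (outcome_option s b sg ps) - q ps (size ps) (outcome_option s b sg ps)
          - avg (S sg (size ps).+1)
    & forall j, (size ps < val (sg j))%N -> net s j b sg ps = Avg u j].
Proof.
case=> hvs heq; elim=> [|d IH] b sg ps hv hsz.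
- rewrite addn0 in hsz.
  have hn1 : (n.-1 < n)%N by lia.
  have hS : forall i x, val (sg i) = n.-1 -> S sg n.-1 x = u i x.
    move=> i x hi; rewrite (S_split _ hi) prednK ?S_n ?addr0 //; lia.
  rewrite hsz; split.
  + move=> a'; set c := (sg^-1)%g (Ordinal hn1).
    have hc : val (sg c) = n.-1 by rewrite /c permKV.
    pose s' := Profile (bid s) (price s)
       (fun b' sg' ps' => if val (sg' c) == n.-1 then a' else choice s b' sg' ps').
    have hd : deviation c s s'.
      split => //=; try by case: hvs.
      by move=> b' sg' ps' hh; rewrite (negbTE hh).
    have := heq c s' hd b sg ps hv.
    rewrite /pay_node /outcome_option.
    have -> : final_prices s' b sg ps = ps by rewrite fp_last.
    rewrite fp_last // /= hc eqxx !payoffE hc ltnn !(hS c) //.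
    have h0 : (0 < n.-1)%N by lia.
    rewrite /q h0; lra.
  + move=> i hi; rewrite net_last ?hi // (hS i) // prednK ?avg_S_n ?subr0 //; lia.
  + move=> j hj; exfalso; have h := ltn_ord (sg j); change (is_true (val (sg j) < n)%N) in h; lia.
- have hlt : (size ps < n.-1)%N by lia.
  set m := size ps.
  set p := price s b sg ps.
  have hp : inP p by case: hvs => _; apply.
  have hv1 := valid_rcons hv hp hlt.
  have hsz1 : (size (rcons ps p) + d)%N = n.-1 by rewrite size_rcons addSnnS.
  have [IHa IHb IHd] := IH b sg _ hv1 hsz1.
  rewrite size_rcons in IHa IHb IHd.
  rewrite -(out_step s b sg hlt) in IHa IHb.
  set a := outcome_option s b sg ps in IHa IHb *.
  have hm : (m < n)%N by lia.
  set i0 := (sg^-1)%g (Ordinal hm).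
  have hi0 : val (sg i0) = m by rewrite /i0 permKV.
  set X := S sg m.+1.
  have hmax : forall x, X x - p x <= X a - p a.
    by move=> x; have := IHa x; rewrite !q_rcons_last.
  have hdev : forall a1 e, 0 < e ->
      S sg m a1 - q ps m a1 - avg X - e <= S sg m a - q ps m a - (X a - p a).
    move=> a1 e he.
    pose p' : pv := fun x => X x - avg X - e * (x == a1)%:R + e / k%:R.
    have hp' : inP p'.
      rewrite /inP; apply/eqP; rewrite /p' !big_split /= sumrN -k_avg sum_const_k.
      rewrite -sum_const_k sumrN.
      have -> : \sum_(i < k) e * (i == a1)%:R = e.
        rewrite (bigD1 a1) //= eqxx mulr1 big1 ?addr0 // => x /negbTE ->; by rewrite mulr0.
      have -> : \sum_(i < k) e / k%:R = e by rewrite sum_const_k mulrC divfK ?kR0.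
      lra.
    pose s' := Profile (bid s)
       (fun b' sg' ps' => if val (sg' i0) == size ps' then p' else price s b' sg' ps')
       (choice s).
    have hd : deviation i0 s s'.
      split => //=.
      * case: hvs => h1 h2; split; first exact: h1.
        move=> b' sg' ps' /=; case: ifP => _ //; exact: h2.
      * by move=> b' sg' ps' hh; rewrite (negbTE hh).
    have := heq i0 s' hd b sg ps hv.
    rewrite (dev_mover hd) // /= hi0 eqxx.
    have hv' := valid_rcons hv hp' hlt.
    have hsz' : (size (rcons ps p') + d)%N = n.-1 by rewrite size_rcons addSnnS.
    have [IHa' _ _] := IH b sg _ hv' hsz'.
    rewrite size_rcons in IHa'.
    set a' := outcome_option s b sg (rcons ps p') in IHa'.
    have ha' : a' = a1.
      have := IHa' a1; rewrite !q_rcons_last /p' eqxx.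
      case: (eqVneq a' a1) => // hne; rewrite mulr1 mulr0 => hh; exfalso.
      have : e <= 0 by move: hh; rewrite /X; lra.
      by rewrite leNgt he.
    have e1 : pay_node u s i0 b sg (rcons ps p') = net s i0 b sg (rcons ps p') + bt b sg i0
      by rewrite /net subrK.
    have e2 : pay_node u s i0 b sg ps = net s i0 b sg ps + bt b sg i0 by rewrite /net subrK.
    rewrite e1 e2 (@net_prev s i0 b sg (rcons ps p')) ?size_rcons ?hi0 // //.
    rewrite net_mover // -/a -/p -/a' ha'.
    rewrite nth_rcons ltnn eqxx q_rcons // (S_split a1 hi0) (S_split a hi0) -/X /p' eqxx mulr1.
    have he' : 0 <= e / k%:R by rewrite divr_ge0 ?ler0n // ltW.
    lra.
  have havg : avg X <= X a - p a.
    rewrite -(avgP0 X hp); exact: (avg_le (f := fun x => X x - p x)).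
  have heqX : X a - p a = avg X.
    apply/eqP; rewrite eq_le havg andbT; apply/ler_addgt0Pr => e he.
    have := hdev a e he; lra.
  have hV : forall a1, S sg m a1 - q ps m a1 <= S sg m a - q ps m a.
    move=> a1; apply/ler_addgt0Pr => e he; have := hdev a1 e he; lra.
  have hconst : forall x, X x - p x = avg X.
    move=> x.
    have hg : forall y : 'I_k, predT y -> 0 <= avg X - (X y - p y).
      by move=> y _; rewrite subr_ge0 -heqX.
    have hsum : \sum_(y < k) (avg X - (X y - p y)) = 0.
      by rewrite sumrB sum_const_k k_avg sumrB (eqP hp) subr0 subrr.
    have := psumr_eq0P hg hsum (isT : predT x); lra.
  split => //.
  + move=> i hi; rewrite net_mover // -/m -/a -/p (S_split a hi) -/X; lra.
  + move=> j hj; rewrite (net_step _ _ _ _ hlt) -/p.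
    case: (eqVneq (val (sg j)) m.+1) => hj1.
    * rewrite IHb //.
      rewrite q_rcons_last -/X -/m (hconst a).
      have -> : avg X = Avg u j + avg (S sg m.+2).
        rewrite /X (avg_ext (g := fun x => u j x + S sg m.+2 x)); last by move=> x; exact: S_split.
        by rewrite avgD.
      lra.
    * apply: IHd; rewrite ltn_neqAle eq_sym hj1; lia.
Qed.


Lemma nth_extend_F (pr : seq pv -> pv) (F : nat -> pv) d (ps : seq pv) j :
  (forall ps', pr ps' = F (size ps')) -> (size ps <= j < size ps + d)%N ->
  nth (fun _ => 0) (extend pr d ps) j = F j.
Proof.
move=> hF; elim: d ps => [|d IH] ps /=; first by rewrite addn0; lia.
move=> hj; case: (eqVneq j (size ps)) => [->|hne].
  by rewrite nth_extend_lt ?size_rcons // nth_rcons ltnn eqxx hF.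
apply: IH; rewrite size_rcons; lia.
Qed.

Definition Wv (a : 'I_k) : R := \sum_(j < n) u j a.

Lemma S0 (sg : {perm 'I_n}) a : S sg 0 a = Wv a.
Proof. by rewrite /S /Wv; apply: eq_bigl. Qed.

Definition stdp (sg : {perm 'I_n}) l : pv := fun x => S sg l x - avg (S sg l).

Lemma stdp_inP sg l : inP (stdp sg l).
Proof. by rewrite /inP /stdp sumrB sum_const_k k_avg subrr. Qed.

Definition isstd (sg : {perm 'I_n}) (ps : seq pv) (l : nat) : bool :=
  [forall x : 'I_k, nth (fun _ => 0) ps l.-1 x == stdp sg l x].

Definition lastns (sg : {perm 'I_n}) (ps : seq pv) : nat :=
  \max_(l : 'I_n | (0 < val l)%N && ~~ isstd sg ps l) val l.

Definition amax (f : 'I_k -> R) : 'I_k := [arg max_(x > Ordinal k0) f x]%O.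

Lemma amaxP (f : 'I_k -> R) x : f x <= f (amax f).
Proof. rewrite /amax; case: arg_maxP => // i _ h; exact: h. Qed.

Definition sstar (a0 : 'I_k) (B : R) : prof :=
  Profile (fun _ => B) (fun b sg ps => stdp sg (size ps).+1)
    (fun b sg ps => if lastns sg ps == 0%N then a0
       else amax (fun x => S sg (lastns sg ps) x - nth (fun _ => 0) ps (lastns sg ps).-1 x)).

Lemma lemC a0 B b (sg : {perm 'I_n}) (ps : seq pv) : efficient u a0 ->
  (size ps <= n.-1)%N ->
  forall x, S sg (size ps) x - q ps (size ps) x <=
    S sg (size ps) (outcome_option (sstar a0 B) b sg ps)
      - q ps (size ps) (outcome_option (sstar a0 B) b sg ps).
Proof.
move=> heff hs x.
set m := size ps.
set fps := final_prices (sstar a0 B) b sg ps.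
have hfp1 : forall j, (j < m)%N -> nth (fun _ => 0) fps j = nth (fun _ => 0) ps j.
  by move=> j hj; rewrite /fps fp_prefix.
have hfp2 : forall j, (m <= j < n.-1)%N -> nth (fun _ => 0) fps j = stdp sg j.+1.
  move=> j hj; rewrite /fps /final_prices.
  apply: (nth_extend_F (F := fun j => stdp sg j.+1)) => //; lia.
have hstd : forall l : 'I_n, (m < l)%N -> isstd sg fps l.
  move=> l hl; have hl' := ltn_ord l.
  apply/forallP => y; rewrite hfp2; last by lia.
  rewrite prednK ?eqxx //; lia.
have hLm : (lastns sg fps <= m)%N.
  apply/bigmax_leqP => l /andP [_ hns]; rewrite leqNgt; apply/negP => hl.
  by move: hns; rewrite hstd.
have hconst : (lastns sg fps < m)%N -> forall y, S sg m y - q ps m y = avg (S sg m).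
  move=> hL y.
  have hm : (m < n)%N by lia.
  have hsm : isstd sg fps (Ordinal hm).
    apply/negPn/negP => hns.
    have := @leq_bigmax_cond _ (fun l : 'I_n => (0 < val l)%N && ~~ isstd sg fps l)
       (fun l => val l) (Ordinal hm).
    rewrite /= hns andbT => /(_ ltac:(lia)); rewrite -/(lastns sg fps); lia.
  move/forallP: hsm => /(_ y) /eqP /=; rewrite hfp1; last by lia.
  rewrite /q; have -> : (0 < m)%N by lia.
  move=> ->; rewrite /stdp; lra.
rewrite /outcome_option -/fps /=.
case: (eqVneq (lastns sg fps) 0%N) => hL0.
- case: (posnP m) => hm0.
  + rewrite hm0 /q /= !S0 !subr0; exact: heff.
  + rewrite !hconst ?hL0 //.
- case: (ltngtP (lastns sg fps) m) => hL.
  + rewrite !hconst //.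
  + lia.
  + have := amaxP (fun x => S sg (lastns sg fps) x - nth (fun _ => 0) fps (lastns sg fps).-1 x) x.
    rewrite hL hfp1 ?hfp1 //; try lia.
    rewrite /q; have -> : (0 < m)%N by lia. done.
Qed.


Lemma valid_sstar a0 B : 0 <= B -> valid_profile (sstar a0 B).
Proof. by move=> hB; split => //= b sg ps; exact: stdp_inP. Qed.

Lemma lemB a0 B : efficient u a0 -> 0 <= B -> NodeEq (sstar a0 B).
Proof.
move=> heff hB; split; first exact: valid_sstar.
move=> i s' hd.
have hvs' : valid_profile s' by case: hd.
have hin : forall (sg : {perm 'I_n}) (i' : 'I_n), (val (sg i') < n)%N by move=> sg i'; exact: ltn_ord.
suff : forall d b sg ps, valid_node b sg ps -> (size ps + d)%N = n.-1 ->
    pay_node u s' i b sg ps <= pay_node u (sstar a0 B) i b sg ps.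
  move=> H b sg ps hv; apply: (H (n.-1 - size ps)%N) => //.
  by case: hv => _ _ _ h; rewrite subnKC.
elim=> [|d IH] b sg ps hv hsz.
- rewrite addn0 in hsz.
  have hi := hin sg i.
  case: (eqVneq (val (sg i)) n.-1) => hpi; last first.
    rewrite (dev_after hd); [exact: lexx | lia | lia].
  rewrite /pay_node !fp_last // !payoffE hpi ltnn.
  have h0 : (0 < n.-1)%N by lia.
  rewrite h0.
  have := @lemC a0 B b sg ps heff (eq_leq hsz) (choice s' b sg ps).
  rewrite /outcome_option fp_last // hsz.
  have hS : forall x, S sg n.-1 x = u i x.
    by move=> x; rewrite (S_split _ hpi) prednK ?S_n ?addr0 //; lia.
  rewrite !hS /q h0; lra.
- have hlt : (size ps < n.-1)%N by lia.
  have hi := hin sg i.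
  case: (ltngtP (val (sg i)) (size ps)) => hpi.
  + rewrite (dev_after hd) //; lia.
  + rewrite (dev_other hd) ?neq_ltn ?hpi ?orbT //.
    rewrite (pay_step (sstar a0 B)) //.
    apply: IH; last by rewrite size_rcons addSnnS.
    apply: valid_rcons => //; exact: stdp_inP.
  + rewrite (dev_mover hd) //.
    set p' := price s' b sg ps.
    have hp' : inP p' by case: hvs' => _; apply.
    set s0 := sstar a0 B.
    have e1 : forall ps', pay_node u s0 i b sg ps' = net s0 i b sg ps' + bt b sg i
      by move=> ps'; rewrite /net subrK.
    rewrite !e1 lerD2r.
    rewrite (@net_prev s0 i b sg (rcons ps p')) ?size_rcons ?hpi //.
    rewrite (@net_mover s0 i b sg ps) //.
    rewrite nth_rcons ltnn eqxx q_rcons //.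
    set a' := outcome_option s0 b sg (rcons ps p').
    set a := outcome_option s0 b sg ps.
    have hC' := @lemC a0 B b sg (rcons ps p') heff.
    rewrite size_rcons in hC'; have {}hC' := hC' hlt.
    rewrite -/s0 -/a' in hC'.
    have hC := @lemC a0 B b sg ps heff (ltnW hlt) a'; rewrite -/s0 -/a in hC.
    have havg : avg (S sg (size ps).+1) <= S sg (size ps).+1 a' - p' a'.
      rewrite -(avgP0 (S sg (size ps).+1) hp').
      apply: (avg_le (f := fun x => S sg (size ps).+1 x - p' x)) => x.
      by have := hC' x; rewrite !q_rcons_last.
    move: hC havg; rewrite (S_split a' hpi) (S_split a hpi) /= /stdp; lra.
Qed.


Lemma n0 : (0 < n)%N. Proof. lia. Qed.

Definition win (sg : {perm 'I_n}) : 'I_n := (sg^-1)%g (Ordinal n0).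

Lemma pos0 (sg : {perm 'I_n}) j : (val (sg j) == 0%N) = (j == win sg).
Proof.
apply/eqP/eqP => [h|->]; last by rewrite /win permKV.
apply: (perm_inj (s := sg)); rewrite /win permKV; apply: val_inj => /=; exact: h.
Qed.

Lemma win_sum (b : 'I_n -> R) (sg : {perm 'I_n}) :
  \sum_(j | val (sg j) == 0%N) b j = b (win sg).
Proof. by apply: big_pred1 => j; rewrite /= pos0. Qed.

Lemma win_max (b : 'I_n -> R) sg : sg \in draws b -> forall j, b j <= b (win sg).
Proof.
rewrite inE => /forallP /(_ (win sg)); rewrite pos0 eqxx /= inE => /forallP h j.
exact: h.
Qed.

Lemma draws_ex (b : 'I_n -> R) : exists sg, sg \in draws b.
Proof.
set w0 := [arg max_(j > Ordinal n0) b j]%O.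
have hw0 : forall j, b j <= b w0.
  by move=> j; rewrite /w0; case: arg_maxP => // x _ h; exact: h.
exists (tperm w0 (Ordinal n0)); rewrite inE; apply/forallP => i; apply/implyP => hi.
have -> : i = w0.
  apply: (perm_inj (s := tperm w0 (Ordinal n0))); rewrite tpermL; apply: val_inj.
  by apply/eqP.
rewrite inE; apply/forallP => j; exact: hw0.
Qed.

Lemma card_draws (b : 'I_n -> R) : (#|draws b|%:R : R) != 0.
Proof.
rewrite pnatr_eq0 -lt0n; have [sg hsg] := draws_ex b; apply/card_gt0P; by exists sg.
Qed.

Lemma chance_const (s : prof) i b (c : R) :
  (forall sg, sg \in draws b -> pay_node u s i b sg [::] = c) -> pay_chance u s i b = c.
Proof.
move=> h; rewrite /pay_chance (eq_bigr (fun _ => c)) // sumr_const -[c *+ _]mulr_natl.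
by rewrite mulrA mulVf ?mul1r // card_draws.
Qed.

Lemma chance_mono (s s' : prof) i b :
  (forall sg, sg \in draws b -> pay_node u s' i b sg [::] <= pay_node u s i b sg [::]) ->
  pay_chance u s' i b <= pay_chance u s i b.
Proof.
move=> h; rewrite /pay_chance ler_wpM2l ?invr_ge0 ?ler0n //; exact: ler_sum.
Qed.

Definition frac (b : 'I_n -> R) i : R :=
  (#|draws b|%:R)^-1 * \sum_(sg in draws b) (val (sg i) == 0%N)%:R.

Lemma chance_split (s : prof) i b (c e : R) :
  (forall sg, sg \in draws b -> pay_node u s i b sg [::] = c + e * (val (sg i) == 0%N)%:R) ->
  pay_chance u s i b = c + e * frac b i.
Proof.
move=> h; rewrite /pay_chance /frac (eq_bigr _ h) big_split /= sumr_const -mulr_sumr.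
have hN := card_draws b.
set N := (#|draws b|%:R : R) in hN *.
rewrite -mulr_natr -/N; field.
exact: hN.
Qed.

Lemma sum_pos_one (D : {set {perm 'I_n}}) (F : {perm 'I_n} -> R) x0 :
  x0 \in D -> (forall x, x \in D -> 0 <= F x) -> 0 < F x0 -> 0 < \sum_(x in D) F x.
Proof.
move=> hx h hF; rewrite (bigD1 x0) //=.
have : 0 <= \sum_(i in D | i != x0) F i by apply: sumr_ge0 => i /andP [hi _]; exact: h.
lra.
Qed.

Lemma frac_pos b i sg0 : sg0 \in draws b -> val (sg0 i) = 0%N -> 0 < frac b i.
Proof.
move=> hs hi; rewrite /frac; apply: mulr_gt0.
  by rewrite invr_gt0 lt0r card_draws ler0n.
apply: (sum_pos_one hs) => [x _|]; first by rewrite ler0n.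
by rewrite hi eqxx ltr01.
Qed.

Lemma frac_lt1 b i sg0 : sg0 \in draws b -> val (sg0 i) != 0%N -> frac b i < 1.
Proof.
move=> hs hi.
have hN := card_draws b.
have hpos : 0 < \sum_(sg in draws b) (1 - (val (sg i) == 0%N)%:R : R).
  apply: (sum_pos_one hs) => [x _|]; first by case: eqP; rewrite ?subrr ?subr0 ?ler01.
  by rewrite (negbTE hi) subr0 ltr01.
rewrite sumrB sumr_const subr_gt0 in hpos.
rewrite /frac; set N := (#|draws b|%:R : R) in hN *.
have hN0 : 0 < N by rewrite lt0r hN ler0n.
rewrite -mulr_natl mulr1 -/N in hpos.
by rewrite ltr_pdivrMl // mulr1.
Qed.

Lemma root_pay (s : prof) (a0 : 'I_k) b (sg : {perm 'I_n}) i : NodeEq s -> efficient u a0 ->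
  (forall j, 0 <= b j) -> valid_draw b sg ->
  pay_node u s i b sg [::] = Avg u i +
    (if val (sg i) == 0%N then Wv a0 - avg Wv - b i else b (win sg) / (n.-1)%:R).
Proof.
move=> hs heff hb hvd.
have hv : valid_node b sg ([::] : seq pv) by split.
have [hA hB hD] := @lemA s hs n.-1 b sg [::] hv (add0n _).
have e : pay_node u s i b sg [::] = net s i b sg [::] + bt b sg i by rewrite /net subrK.
rewrite e /bt win_sum.
case: (eqVneq (val (sg i)) 0%N) => hi.
- rewrite hB // /q /= !S0.
  set a := outcome_option s b sg [::] in hA *.
  have hWa : Wv a = Wv a0.
    apply/le_anti; rewrite heff /=.
    by have := hA a0; rewrite /q /= !S0 !subr0.
  have -> : avg (S sg 1) = avg Wv - Avg u i.
    have : avg Wv = Avg u i + avg (S sg 1).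
      rewrite (avg_ext (g := fun x => u i x + S sg 1 x)); first by rewrite avgD.
      by move=> x; rewrite -(S0 sg); exact: S_split.
    lra.
  rewrite hWa subr0; lra.
- rewrite hD ?lt0n //.
Qed.

Lemma exists_other (i : 'I_n) : exists j : 'I_n, j != i.
Proof.
have h1 : (1 < n)%N by [].
case: (eqVneq i (Ordinal n0)) => h.
  by exists (Ordinal h1); rewrite h; apply/eqP => /(congr1 val).
by exists (Ordinal n0); rewrite eq_sym.
Qed.


Lemma spne_node (s : prof) : SPNE u s -> NodeEq s.
Proof.
case=> hv h; split => // i s' hd b sg ps hvn; by case: (h i s' hd) => _ _; apply.
Qed.

Lemma bid_dev (s : prof) i (b' : 'I_n -> R) : SPNE u s ->
  (forall j, j != i -> b' j = bid s j) -> 0 <= b' i -> pay_chance u s i b' <= pay_root u s i.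
Proof.
move=> hs hb' hbi.
pose s' := Profile b' (price s) (choice s).
have hd : deviation i s s'.
  case: hs => [[hv1 hv2] _]; split => //; split => //= j.
  by case: (eqVneq j i) => [->|hj] //; rewrite hb' //.
by case: hs => _ /(_ i s' hd) [h _ _]; exact: h.
Qed.

Lemma Wv_eff : efficient u (amax Wv).
Proof. move=> a'; have := amaxP Wv a'; by []. Qed.

Lemma C_ge0 a0 : efficient u a0 -> 0 <= Wv a0 - avg Wv.
Proof. move=> heff; rewrite subr_ge0; apply: avg_le => x; exact: heff. Qed.

Lemma drawsP (b : 'I_n -> R) (sg : {perm 'I_n}) : sg \in draws b -> valid_draw b sg.
Proof. by rewrite inE. Qed.

Lemma win_unique (b : 'I_n -> R) sg i : sg \in draws b ->
  (forall j, j != i -> b j < b i) -> win sg = i.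
Proof.
move=> hs h; apply/eqP; apply/negPn/negP => hne.
have := win_max hs i; have := h _ hne; rewrite ltNge => /negP; done.
Qed.

Lemma part3 (s : prof) : SPNE u s ->
  forall i j, pay_root u s i - pay_root u s j = Avg u i - Avg u j.
Proof.
move=> hs.
have hn := spne_node hs.
have hb : forall j, 0 <= bid s j by case: hs => [[h _] _].
set b := bid s.
set a0 := amax Wv.
have heff := Wv_eff.
set C := Wv a0 - avg Wv.
have hC : 0 <= C := C_ge0 heff.
have [sg0 hsg0] := draws_ex b.
set w0 := win sg0.
set B := b w0.
have hBmax : forall j, b j <= B := win_max hsg0.
have hwinB : forall sg, sg \in draws b -> b (win sg) = B.
  by move=> sg hsg; apply/le_anti; rewrite hBmax win_max.
have hB0 : 0 <= B by apply: hb.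
have hn1 : ((n.-1)%:R : R) != 0 by rewrite pnatr_eq0; lia.
set Z := B / (n.-1)%:R.
set E := C - B - Z.
have hpay : forall i sg, sg \in draws b ->
    pay_node u s i b sg [::] = (Avg u i + Z) + E * (val (sg i) == 0%N)%:R.
  move=> i sg hsg; rewrite (@root_pay s a0 b sg i hn heff) //; last exact: drawsP.
  rewrite pos0; case: (eqVneq i (win sg)) => [->|hi].
    by rewrite hwinB // /E /C mulr1; lra.
  by rewrite hwinB // mulr0 addr0.
have hch : forall i, pay_root u s i = Avg u i + Z + E * frac b i.
  move=> i; exact: chance_split (hpay i).
have hE : E = 0.
  apply/le_anti/andP; split.
  - have [i1 hi1] := exists_other w0.
    have hf : frac b i1 < 1 by apply: (frac_lt1 hsg0); rewrite pos0.
    have key : forall e, 0 < e -> E - E * frac b i1 <= e.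
      move=> e he.
      pose b' := fun j => if j == i1 then B + e else b j.
      have := @bid_dev s i1 b' hs.
      have hb'1 : forall j, j != i1 -> b' j = b j by move=> j hj; rewrite /b' (negbTE hj).
      have hb'i : b' i1 = B + e by rewrite /b' eqxx.
      move=> /(_ hb'1); rewrite hb'i => /(_ ltac:(lra)).
      rewrite (@chance_const s i1 b' (Avg u i1 + C - (B + e))).
        by rewrite hch /E; lra.
      move=> sg hsg; rewrite (@root_pay s a0 b' sg i1 hn heff); first last.
      + exact: drawsP.
      + by move=> j; rewrite /b'; case: eqP => _; rewrite ?hb //; lra.
      have hw : win sg = i1.
        apply: (win_unique hsg) => j hj; rewrite hb'1 // hb'i.
        by have := hBmax j; lra.
      rewrite pos0 hw eqxx hb'i /C; lra.
    have : E - E * frac b i1 <= 0.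
      by apply/ler_addgt0Pr => e he; rewrite add0r; exact: key.
    nra.
  - case: (eqVneq B 0) => hBz.
      by rewrite /E /Z hBz mul0r !subr0.
    have hBp : 0 < B by rewrite lt0r hBz hB0.
    case: (boolP [exists j, (j != w0) && (b j == B)]).
    + case/existsP => j1 /andP [hj1 /eqP hbj1].
      pose b' := fun j => if j == w0 then 0 else b j.
      have hb'1 : forall j, j != w0 -> b' j = b j by move=> j hj; rewrite /b' (negbTE hj).
      have := @bid_dev s w0 b' hs hb'1.
      rewrite /b' eqxx => /(_ (lexx 0)).
      rewrite (@chance_const s w0 b' (Avg u w0 + Z)).
        rewrite hch => h.
        have hf : 0 < frac b w0 by apply: (frac_pos hsg0); apply/eqP; rewrite pos0.
        have : 0 <= E * frac b w0 by lra.
        nra.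
      move=> sg hsg; rewrite (@root_pay s a0 b' sg w0 hn heff); first last.
      + exact: drawsP.
      + by move=> j; rewrite /b'; case: eqP => _; rewrite ?hb //.
      have hw : win sg != w0.
        apply/eqP => hw; have := win_max hsg j1; rewrite hw /b' eqxx (negbTE hj1) hbj1.
        lra.
      have hbw : b' (win sg) = B.
        apply/le_anti; rewrite hb'1 // hBmax /=.
        have := win_max hsg j1; rewrite /b' (negbTE hj1) (negbTE hw) hbj1 //.
      by rewrite pos0 eq_sym (negbTE hw) hbw.
    + move=> hno.
      have hlt : forall j, j != w0 -> b j < B.
        move=> j hj; rewrite lt_neqAle hBmax andbT; apply/negP => /eqP hbj.
        move/negP: hno; apply; apply/existsP; exists j; by rewrite hj hbj eqxx.
      have [jo hjo] := exists_other w0.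
      set j1 := [arg max_(j > jo | j != w0) b j]%O.
      have hj1 : j1 != w0 /\ forall j, j != w0 -> b j <= b j1.
        by rewrite /j1; case: arg_maxP => // x hx h; split => // j hj; exact: h.
      case: hj1 => hj1w hj1m.
      have hbj1 := hlt _ hj1w.
      set c := (B + b j1) / 2.
      have hc1 : b j1 < c by rewrite /c; lra.
      have hc2 : c < B by rewrite /c; lra.
      pose b' := fun j => if j == w0 then c else b j.
      have hb'1 : forall j, j != w0 -> b' j = b j by move=> j hj; rewrite /b' (negbTE hj).
      have hcpos : 0 <= c by have := hb j1; rewrite -/b /c; lra.
      have := @bid_dev s w0 b' hs hb'1.
      rewrite {1}/b' eqxx => /(_ hcpos).
      rewrite (@chance_const s w0 b' (Avg u w0 + C - c)); last first.
        move=> sg hsg; rewrite (@root_pay s a0 b' sg w0 hn heff); first last.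
        * exact: drawsP.
        * by move=> j; rewrite /b'; case: eqP => _; rewrite ?hb.
        have hw : win sg = w0.
          apply: (win_unique hsg) => j hj; rewrite hb'1 // /b' eqxx.
          by have := hj1m _ hj; lra.
        by rewrite pos0 hw eqxx /b' eqxx /C; lra.
      rewrite /pay_root -/b (@chance_const s w0 b (Avg u w0 + C - B)); first lra.
      move=> sg hsg; rewrite (@root_pay s a0 b sg w0 hn heff) //; last exact: drawsP.
      have hw : win sg = w0.
        apply: (win_unique hsg) => j hj; exact: hlt.
      by rewrite pos0 hw eqxx -/C -/B addrA.
move=> i j; rewrite !hch hE !mul0r; lra.
Qed.


Lemma lastns_root a0 B b (sg : {perm 'I_n}) :
  lastns sg (final_prices (sstar a0 B) b sg [::]) = 0%N.
Proof.
apply/eqP; rewrite -leqn0; apply/bigmax_leqP => l /andP [hl hns]; exfalso.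
move/negP: hns; apply; apply/forallP => y.
have hl' := ltn_ord l.
rewrite /final_prices (nth_extend_F (F := fun j => stdp sg j.+1)) //= ?prednK //; lia.
Qed.

Lemma realized_sstar a0 B (sg : {perm 'I_n}) : realized (sstar a0 B) sg = a0.
Proof. by rewrite /realized /outcome_option /= lastns_root. Qed.

Lemma part2 a0 : efficient u a0 ->
  exists s : prof, SPNE u s /\ forall sg, valid_draw (bid s) sg -> realized s sg = a0.
Proof.
move=> heff.
have hC := C_ge0 heff.
set C := Wv a0 - avg Wv in hC.
set Bst := C * (n.-1)%:R / n%:R.
have hB : 0 <= Bst by rewrite /Bst; apply: divr_ge0; [apply: mulr_ge0|]; rewrite ?ler0n.
set s := sstar a0 Bst.
have hn := lemB heff hB.
have hn1 : ((n.-1)%:R : R) != 0 by rewrite pnatr_eq0; lia.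
have hn1p : 0 <= ((n.-1)%:R : R) by rewrite ler0n.
have hnR : (n%:R : R) = (n.-1)%:R + 1 by rewrite natr1 prednK //; lia.
set Z := Bst / (n.-1)%:R.
have hZ : C - Bst = Z.
  rewrite /Z /Bst hnR; field.
  rewrite hn1 /=; apply/negP => /eqP h.
  have : ((n.-1)%:R : R) = -1 by lra.
  lra.
have hroot : forall i, pay_root u s i = Avg u i + Z.
  move=> i; apply: chance_const => sg hsg.
  rewrite (@root_pay s a0 _ sg i hn heff) //; last exact: drawsP.
  by case: ifP => _; rewrite /= ?hZ.
exists s; split; last by move=> sg _; exact: realized_sstar.
split; first exact: valid_sstar.
move=> i s' hd; split.
- have hvs' : valid_profile s' by case: hd.
  have hb' : forall j, 0 <= bid s' j by case: hvs'.
  set b' := bid s' in hb' *.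
  have hb'o : forall j, j != i -> b' j = Bst by case: hd => _ h _ _ j hj; rewrite /b' h.
  rewrite hroot /pay_root -/b'.
  have h1 : pay_chance u s' i b' <= pay_chance u s i b'.
    apply: chance_mono => sg hsg; apply: hn.2 => //; split => //; exact: drawsP.
  apply: le_trans h1 _.
  case: (ltP Bst (b' i)) => hbi.
  + rewrite (@chance_const s i b' (Avg u i + C - b' i)); first by rewrite -hZ; lra.
    move=> sg hsg; rewrite (@root_pay s a0 b' sg i hn heff) //; last exact: drawsP.
    have hw : win sg = i by apply: (win_unique hsg) => j hj; rewrite hb'o.
    by rewrite pos0 hw eqxx -/C addrA.
  + rewrite (@chance_const s i b' (Avg u i + Z)) //.
    move=> sg hsg; rewrite (@root_pay s a0 b' sg i hn heff) //; last exact: drawsP.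
    have [j0 hj0] := exists_other i.
    have hbw : b' (win sg) = Bst.
      apply: le_anti; apply/andP; split.
      * by case: (eqVneq (win sg) i) => [->|h] //; rewrite hb'o.
      * by have := win_max hsg j0; rewrite hb'o.
    rewrite pos0 hbw; case: eqVneq => [hw|_] //.
    by rewrite hw hbw -/C hZ.
- move=> b hb; apply: chance_mono => sg hsg; apply: hn.2 => //; split => //; exact: drawsP.
- move=> b sg ps hv; exact: hn.2.
Qed.

End Main.

Theorem proposition5 (R : realType) (n k : nat) (u : 'I_n -> 'I_k -> R) :
  (2 <= n)%N -> (0 < k)%N ->
  [/\ (forall s : profile R n k, SPNE u s ->
         forall sg, valid_draw (bid s) sg -> efficient u (realized s sg)),
      (forall a : 'I_k, efficient u a ->
         exists s : profile R n k, SPNE u s /\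
           forall sg, valid_draw (bid s) sg -> realized s sg = a)
    & (forall s : profile R n k, SPNE u s ->
         forall i j, pay_root u s i - pay_root u s j = Avg u i - Avg u j)].
Proof.
move=> n2 k0; split.
- move=> s hs sg hvd.
  have hn := spne_node hs.
  have hv : valid_node (bid s) sg ([::] : seq (price_vec R k)).
    by split => //; case: hs => [[h _] _].
  have [hA _ _] := @lemA R n k u n2 k0 s hn n.-1 (bid s) sg [::] hv (add0n _).
  move=> a'; have := hA a'; rewrite /q /= !S0 !subr0 //.
- exact: (part2 n2 k0).
- exact: (part3 n2 k0).
Qed.
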